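(* For $\alpha,\beta\in\mathbb{C}$ with $|\alpha|\ne|\beta|$ and $r_1,r_2\in\mathbb{R}$, let $X_{\alpha,\beta}=\Re\int\Phi:\mathbb{C}-\{0\}\to\mathbb{R}^3$ with $\Phi_1=\big(\frac1{z^2}+\frac{r_1}{z}+\frac{\alpha+\overline\beta}{2}\big)dz$, $\Phi_2=\big(\frac{\imath}{z^2}+\frac{r_2}{z}+\frac{\alpha-\overline\beta}{2\imath}\big)dz$, $\Phi_3=\frac{dz}{z}$. Then $X_{\alpha,\beta}$ is a well-defined harmonic map, and it is an immersion if and only if $(\alpha,\beta)\in\Omega:=\mathbb{C}^2-\big(\{(u,v):|u|\le|v|\}\cup\{(u,v):\Re(u)\ge0,\ |\Im(u)|\le|v|\}\big)$. *)

(* Defs.v *)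
From Stdlib Require Import Reals.
From Coquelicot Require Import Coquelicot.
Open Scope R_scope.

(* The Weierstrass-type data Phi_j = phi_j(z) dz, j = 0,1,2 (paper's Phi_1, Phi_2, Phi_3). *)
Definition Phi (r1 r2 : R) (alpha beta : C) (j : nat) (z : C) : C :=
  match j with
  | 0%nat => (/ (z * z) + RtoC r1 / z + (alpha + Cconj beta) / RtoC 2)%C
  | 1%nat => (Ci / (z * z) + RtoC r2 / z + (alpha - Cconj beta) / (RtoC 2 * Ci))%C
  | _ => (/ z)%C
  end.

(* X = (X_0, X_1, X_2) : C - {0} -> R^3 is "Re \int Phi", i.e. dX_j = Re (Phi_j),
   which for X_j as a function of (x,y) means
   dX_j/dx = Re phi_j(z),  dX_j/dy = Re (i phi_j(z)) = - Im phi_j(z), for all z <> 0. *)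
Definition is_Re_primitive (r1 r2 : R) (alpha beta : C) (X : nat -> R -> R -> R) : Prop :=
  forall j : nat, (j < 3)%nat ->
  forall x y : R, (x, y) <> (0, 0) ->
    is_derive (fun t => X j t y) x (Re (Phi r1 r2 alpha beta j (x, y))) /\
    is_derive (fun t => X j x t) y (- Im (Phi r1 r2 alpha beta j (x, y))).

Definition dx (f : R -> R -> R) (x y : R) : R := Derive (fun t => f t y) x.
Definition dy (f : R -> R -> R) (x y : R) : R := Derive (fun t => f x t) y.

Definition harmonic_on (U : R -> R -> Prop) (f : R -> R -> R) : Prop :=
  forall x y : R, U x y ->
    ex_derive (fun t => f t y) x /\ ex_derive (fun t => f x t) y /\
    ex_derive (fun t => dx f t y) x /\ ex_derive (fun t => dx f x t) y /\
    ex_derive (fun t => dy f t y) x /\ ex_derive (fun t => dy f x t) y /\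
    continuous (fun p : R * R => dx (dx f) (fst p) (snd p)) (x, y) /\
    continuous (fun p : R * R => dy (dx f) (fst p) (snd p)) (x, y) /\
    continuous (fun p : R * R => dx (dy f) (fst p) (snd p)) (x, y) /\
    continuous (fun p : R * R => dy (dy f) (fst p) (snd p)) (x, y) /\
    dx (dx f) x y + dy (dy f) x y = 0.

Definition punctured_plane (x y : R) : Prop := (x, y) <> (0, 0).

Definition immersion_on (U : R -> R -> Prop) (X : nat -> R -> R -> R) : Prop :=
  forall x y : R, U x y ->
    forall a b : R,
      (forall j : nat, (j < 3)%nat -> a * dx (X j) x y + b * dy (X j) x y = 0) ->
      a = 0 /\ b = 0.

Definition Omega (u v : C) : Prop :=
  ~ (Cmod u <= Cmod v) /\ ~ (0 <= Re u /\ Rabs (Im u) <= Cmod v).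

(* Main.v *)
Require Import Defs.
From Stdlib Require Import Reals Lra Psatz.
From Coquelicot Require Import Coquelicot.
Open Scope R_scope.


Definition uu (x y : R) : R := / (x*x + y*y).

Definition P (r1 r2 : R) (al be : C) (j : nat) (x y : R) : R :=
  match j with
  | 0%nat => (x*x - y*y) * (uu x y * uu x y) + r1 * x * uu x y + (fst al + fst be) / 2
  | 1%nat => 2 * x * y * (uu x y * uu x y) + r2 * x * uu x y + (snd al + snd be) / 2
  | _ => x * uu x y
  end.
Definition Q (r1 r2 : R) (al be : C) (j : nat) (x y : R) : R :=
  match j with
  | 0%nat => 2 * x * y * (uu x y * uu x y) + r1 * y * uu x y - (snd al - snd be) / 2
  | 1%nat => - (x*x - y*y) * (uu x y * uu x y) + r2 * y * uu x y + (fst al - fst be) / 2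
  | _ => y * uu x y
  end.

Lemma Dpos x y : (x,y) <> (0,0) -> 0 < x*x + y*y.
Proof.
  intros H. destruct (Req_dec x 0) as [->|Hx].
  - destruct (Req_dec y 0) as [->|Hy]; [congruence|]. nra.
  - nra.
Qed.

Lemma ReP r1 r2 al be j x y : (x,y) <> (0,0) ->
  Re (Phi r1 r2 al be j (x,y)) = P r1 r2 al be j x y /\
  - Im (Phi r1 r2 al be j (x,y)) = Q r1 r2 al be j x y.
Proof.
  intros H. pose proof (Dpos x y H) as HD.
  assert (HD2 : (x*x - y*y)^2 + (x*y+y*x)^2 <> 0) by nra.
  destruct al as [a1 a2], be as [b1 b2].
  destruct j as [|[|j]]; unfold Phi, P, Q, uu;
  unfold Re, Im, Cplus, Cminus, Copp, Cmult, Cinv, Cdiv, Cconj, RtoC, Ci; simpl;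
  split; field; repeat split; try lra; try nra.
Qed.


Definition c3 x y := x*x*x - 3*x*y*y.
Definition d3 x y := - (3*x*x*y - y*y*y).
Definition RR (r1 r2 : R) (j : nat) (x y : R) : R :=
  match j with
  | 0%nat => -2 * c3 x y * (uu x y * uu x y * uu x y) - r1 * (x*x - y*y) * (uu x y * uu x y)
  | 1%nat => 2 * d3 x y * (uu x y * uu x y * uu x y) - r2 * (x*x - y*y) * (uu x y * uu x y)
  | _ => - (x*x - y*y) * (uu x y * uu x y)
  end.
Definition SS (r1 r2 : R) (j : nat) (x y : R) : R :=
  match j with
  | 0%nat => -2 * d3 x y * (uu x y * uu x y * uu x y) + r1 * (2*x*y) * (uu x y * uu x y)
  | 1%nat => -2 * c3 x y * (uu x y * uu x y * uu x y) + r2 * (2*x*y) * (uu x y * uu x y)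
  | _ => 2*x*y * (uu x y * uu x y)
  end.

Ltac dsolve := unfold P, Q, RR, SS, uu, c3, d3; auto_derive; [repeat split; lra | field; lra].

Lemma dPx r1 r2 al be j x y : 0 < x*x+y*y ->
  is_derive (fun t => P r1 r2 al be j t y) x (RR r1 r2 j x y).
Proof. intros HD. destruct j as [|[|j]]; dsolve. Qed.
Lemma dPy r1 r2 al be j x y : 0 < x*x+y*y ->
  is_derive (fun t => P r1 r2 al be j x t) y (- SS r1 r2 j x y).
Proof. intros HD. destruct j as [|[|j]]; dsolve. Qed.
Lemma dQx r1 r2 al be j x y : 0 < x*x+y*y ->
  is_derive (fun t => Q r1 r2 al be j t y) x (- SS r1 r2 j x y).
Proof. intros HD. destruct j as [|[|j]]; dsolve. Qed.
Lemma dQy r1 r2 al be j x y : 0 < x*x+y*y ->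
  is_derive (fun t => Q r1 r2 al be j x t) y (- RR r1 r2 j x y).
Proof. intros HD. destruct j as [|[|j]]; dsolve. Qed.


Definition Xf (r1 r2 : R) (al be : C) (j : nat) (x y : R) : R :=
  match j with
  | 0%nat => - x * uu x y + r1 * (ln (x*x+y*y) / 2) + (fst al + fst be) / 2 * x - (snd al - snd be) / 2 * y
  | 1%nat => - y * uu x y + r2 * (ln (x*x+y*y) / 2) + (snd al + snd be) / 2 * x + (fst al - fst be) / 2 * y
  | _ => ln (x*x+y*y) / 2
  end.

Lemma Xf_prim r1 r2 al be : is_Re_primitive r1 r2 al be (Xf r1 r2 al be).
Proof.
  intros j Hj x y H. destruct (ReP r1 r2 al be j x y H) as [E1 E2].
  rewrite E1, E2. pose proof (Dpos x y H) as HD.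
  destruct j as [|[|j]]; unfold Xf, P, Q, uu; split; auto_derive; try (repeat split; lra); field; lra.
Qed.

Lemma loc1x x y : (x,y) <> (0,0) -> locally x (fun t => (t,y) <> (0,0)).
Proof.
  intros H. destruct (Req_dec x 0) as [->|Hx].
  - exists (mkposreal 1 Rlt_0_1). intros t _ E. apply H. inversion E. subst. reflexivity.
  - assert (Hp : 0 < Rabs x) by (apply Rabs_pos_lt; auto).
    exists (mkposreal _ Hp). intros t Ht E. inversion E; subst.
    change (Rabs (0 - x) < Rabs x) in Ht. rewrite Rminus_0_l, Rabs_Ropp in Ht. lra.
Qed.
Lemma loc1y x y : (x,y) <> (0,0) -> locally y (fun t => (x,t) <> (0,0)).
Proof.
  intros H. destruct (Req_dec y 0) as [->|Hy].
  - exists (mkposreal 1 Rlt_0_1). intros t _ E. apply H. inversion E. subst. reflexivity.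
  - assert (Hp : 0 < Rabs y) by (apply Rabs_pos_lt; auto).
    exists (mkposreal _ Hp). intros t Ht E. inversion E; subst.
    change (Rabs (0 - y) < Rabs y) in Ht. rewrite Rminus_0_l, Rabs_Ropp in Ht. lra.
Qed.
Lemma loc2 x y : (x,y) <> (0,0) -> locally ((x,y) : R*R) (fun p : R*R => p <> (0,0)).
Proof.
  intros H. destruct (Req_dec x 0) as [->|Hx].
  - destruct (Req_dec y 0) as [->|Hy]; [congruence|].
    assert (Hp : 0 < Rabs y) by (apply Rabs_pos_lt; auto).
    exists (mkposreal _ Hp). intros [p1 p2] [_ Ht] E. inversion E; subst.
    change (Rabs (0 - y) < Rabs y) in Ht. rewrite Rminus_0_l, Rabs_Ropp in Ht. lra.
  - assert (Hp : 0 < Rabs x) by (apply Rabs_pos_lt; auto).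
    exists (mkposreal _ Hp). intros [p1 p2] [Ht _] E. inversion E; subst.
    change (Rabs (0 - x) < Rabs x) in Ht. rewrite Rminus_0_l, Rabs_Ropp in Ht. lra.
Qed.



Lemma dxX (r1 r2 : R) (al be : C) (X : nat -> R -> R -> R) (HX : is_Re_primitive r1 r2 al be X) j x y : (j < 3)%nat -> (x,y) <> (0,0) -> dx (X j) x y = P r1 r2 al be j x y.
Proof. intros Hj H. destruct (HX j Hj x y H) as [H1 _]. unfold dx. exact (eq_trans (is_derive_unique _ _ _ H1) (proj1 (ReP r1 r2 al be j x y H))). Qed.
Lemma dyX (r1 r2 : R) (al be : C) (X : nat -> R -> R -> R) (HX : is_Re_primitive r1 r2 al be X) j x y : (j < 3)%nat -> (x,y) <> (0,0) -> dy (X j) x y = Q r1 r2 al be j x y.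
Proof. intros Hj H. destruct (HX j Hj x y H) as [_ H1]. unfold dy. exact (eq_trans (is_derive_unique _ _ _ H1) (proj2 (ReP r1 r2 al be j x y H))). Qed.

Lemma d_dxx (r1 r2 : R) (al be : C) (X : nat -> R -> R -> R) (HX : is_Re_primitive r1 r2 al be X) j x y : (j<3)%nat -> (x,y) <> (0,0) -> is_derive (fun t => dx (X j) t y) x (RR r1 r2 j x y).
Proof. intros Hj H. apply (is_derive_ext_loc (fun t => P r1 r2 al be j t y)).
  - destruct (loc1x x y H) as [e He]. exists e. intros t Ht. symmetry. apply dxX; auto.
  - apply dPx, Dpos, H. Qed.
Lemma d_dxy (r1 r2 : R) (al be : C) (X : nat -> R -> R -> R) (HX : is_Re_primitive r1 r2 al be X) j x y : (j<3)%nat -> (x,y) <> (0,0) -> is_derive (fun t => dx (X j) x t) y (- SS r1 r2 j x y).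
Proof. intros Hj H. apply (is_derive_ext_loc (fun t => P r1 r2 al be j x t)).
  - destruct (loc1y x y H) as [e He]. exists e. intros t Ht. symmetry. apply dxX; auto.
  - apply dPy, Dpos, H. Qed.
Lemma d_dyx (r1 r2 : R) (al be : C) (X : nat -> R -> R -> R) (HX : is_Re_primitive r1 r2 al be X) j x y : (j<3)%nat -> (x,y) <> (0,0) -> is_derive (fun t => dy (X j) t y) x (- SS r1 r2 j x y).
Proof. intros Hj H. apply (is_derive_ext_loc (fun t => Q r1 r2 al be j t y)).
  - destruct (loc1x x y H) as [e He]. exists e. intros t Ht. symmetry. apply dyX; auto.
  - apply dQx, Dpos, H. Qed.
Lemma d_dyy (r1 r2 : R) (al be : C) (X : nat -> R -> R -> R) (HX : is_Re_primitive r1 r2 al be X) j x y : (j<3)%nat -> (x,y) <> (0,0) -> is_derive (fun t => dy (X j) x t) y (- RR r1 r2 j x y).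
Proof. intros Hj H. apply (is_derive_ext_loc (fun t => Q r1 r2 al be j x t)).
  - destruct (loc1y x y H) as [e He]. exists e. intros t Ht. symmetry. apply dyX; auto.
  - apply dQy, Dpos, H. Qed.

Lemma cont_plus (f g : R*R -> R) p : continuous f p -> continuous g p -> continuous (fun q => f q + g q) p.
Proof. intros. apply (continuous_plus f g); auto. Qed.
Lemma cont_minus (f g : R*R -> R) p : continuous f p -> continuous g p -> continuous (fun q => f q - g q) p.
Proof. intros. apply (continuous_minus f g); auto. Qed.
Lemma cont_mult (f g : R*R -> R) p : continuous f p -> continuous g p -> continuous (fun q => f q * g q) p.
Proof. intros. apply (continuous_mult f g); auto. Qed.
Lemma cont_opp (f : R*R -> R) p : continuous f p -> continuous (fun q => - f q) p.
Proof. intros. apply (continuous_opp f); auto. Qed.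
Lemma cont_inv (f : R*R -> R) p : continuous f p -> f p <> 0 -> continuous (fun q => / f q) p.
Proof. intros. apply (continuous_comp f Rinv); auto. apply continuous_Rinv; auto. Qed.
Lemma cont_fst (x y : R) : continuous (fun q : R*R => fst q) (x,y).
Proof. apply continuous_fst. Qed.
Lemma cont_snd (x y : R) : continuous (fun q : R*R => snd q) (x,y).
Proof. apply continuous_snd. Qed.
Lemma cont_c (c : R) p : continuous (fun q : R*R => c) p.
Proof. apply continuous_const. Qed.


Ltac cstep := match goal with
  | |- continuous (fun q => fst q) _ => apply cont_fst
  | |- continuous (fun q => snd q) _ => apply cont_snd
  | |- continuous (fun q => Rplus (@?f q) (@?g q)) _ => apply (cont_plus f g)
  | |- continuous (fun q => Rminus (@?f q) (@?g q)) _ => apply (cont_minus f g)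
  | |- continuous (fun q => Rmult (@?f q) (@?g q)) _ => apply (cont_mult f g)
  | |- continuous (fun q => Ropp (@?f q)) _ => apply (cont_opp f)
  | |- continuous (fun q => Rinv (@?f q)) _ => apply (cont_inv f); [| simpl; lra]
  | |- continuous (fun q => _) _ => apply cont_c
  end.
Lemma contRS r1 r2 j x y : (x,y) <> (0,0) ->
  continuous (fun p : R*R => RR r1 r2 j (fst p) (snd p)) (x,y) /\
  continuous (fun p : R*R => SS r1 r2 j (fst p) (snd p)) (x,y).
Proof.
  intros H. pose proof (Dpos x y H).
  destruct j as [|[|j]]; unfold RR, SS, uu, c3, d3; split; repeat cstep.
Qed.

Lemma context2 (F G : R -> R -> R) x y :
  (x,y) <> (0,0) -> (forall a b, (a,b) <> (0,0) -> F a b = G a b) ->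
  continuous (fun p : R*R => G (fst p) (snd p)) (x,y) ->
  continuous (fun p : R*R => F (fst p) (snd p)) (x,y).
Proof.
  intros H HE HC. refine (continuous_ext_loc _ _ _ _ HC).
  destruct (loc2 x y H) as [e He]. exists e. intros [a b] Hab. simpl. symmetry. apply HE. apply (He (a,b) Hab).
Qed.

Lemma harm r1 r2 al be X : is_Re_primitive r1 r2 al be X ->
  forall j, (j<3)%nat -> harmonic_on punctured_plane (X j).
Proof.
  intros HX j Hj x y H. unfold punctured_plane in H.
  destruct (HX j Hj x y H) as [H1 H2].
  pose proof (d_dxx _ _ _ _ _ HX j x y Hj H) as D1.
  pose proof (d_dxy _ _ _ _ _ HX j x y Hj H) as D2.
  pose proof (d_dyx _ _ _ _ _ HX j x y Hj H) as D3.
  pose proof (d_dyy _ _ _ _ _ HX j x y Hj H) as D4.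
  destruct (contRS r1 r2 j x y H) as [CR CS].
  split; [eexists; exact H1|]. split; [eexists; exact H2|].
  split; [eexists; exact D1|]. split; [eexists; exact D2|].
  split; [eexists; exact D3|]. split; [eexists; exact D4|].
  split.
  { apply (context2 _ (RR r1 r2 j) x y H); auto. intros a b Hab.
    unfold dx at 1. apply is_derive_unique. apply (d_dxx _ _ _ _ _ HX j a b Hj Hab). }
  split.
  { apply (context2 _ (fun a b => - SS r1 r2 j a b) x y H).
    - intros a b Hab. unfold dy at 1. apply is_derive_unique. apply (d_dxy _ _ _ _ _ HX j a b Hj Hab).
    - apply (continuous_opp (fun p : R*R => SS r1 r2 j (fst p) (snd p))). auto. }
  split.
  { apply (context2 _ (fun a b => - SS r1 r2 j a b) x y H).
    - intros a b Hab. unfold dx at 1. apply is_derive_unique. apply (d_dyx _ _ _ _ _ HX j a b Hj Hab).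
    - apply (continuous_opp (fun p : R*R => SS r1 r2 j (fst p) (snd p))). auto. }
  split.
  { apply (context2 _ (fun a b => - RR r1 r2 j a b) x y H).
    - intros a b Hab. unfold dy at 1. apply is_derive_unique. apply (d_dyy _ _ _ _ _ HX j a b Hj Hab).
    - apply (continuous_opp (fun p : R*R => RR r1 r2 j (fst p) (snd p))). auto. }
  unfold dx at 1, dy at 1.
  pose proof (is_derive_unique _ _ _ D1) as E1. pose proof (is_derive_unique _ _ _ D4) as E4.
  simpl in E1, E4. rewrite E1, E4. ring.
Qed.


Definition nonimm (al be : C) : Prop :=
  exists s, 0 < s /\ (fst al - s)^2 + (snd al)^2 = (fst be)^2 + (snd be)^2.

Lemma imm_II r1 r2 al be X : is_Re_primitive r1 r2 al be X ->
  ~ nonimm al be -> immersion_on punctured_plane X.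
Proof.
  intros HX Hn x y Hxy a b Hab. unfold punctured_plane in Hxy.
  pose proof (Dpos x y Hxy) as HD.
  assert (HE : forall j, (j<3)%nat -> a * P r1 r2 al be j x y + b * Q r1 r2 al be j x y = 0).
  { intros j Hj. rewrite <- (dxX _ _ _ _ _ HX j x y Hj Hxy), <- (dyX _ _ _ _ _ HX j x y Hj Hxy). auto. }
  pose proof (HE 0%nat ltac:(lia)) as E0. pose proof (HE 1%nat ltac:(lia)) as E1.
  pose proof (HE 2%nat ltac:(lia)) as E2.
  destruct al as [a1 a2], be as [b1 b2].
  set (P0 := P r1 r2 (a1,a2) (b1,b2) 0 x y) in *.
  set (Q0 := Q r1 r2 (a1,a2) (b1,b2) 0 x y) in *.
  set (P1 := P r1 r2 (a1,a2) (b1,b2) 1 x y) in *.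
  set (Q1 := Q r1 r2 (a1,a2) (b1,b2) 1 x y) in *.
  assert (L : a*x + b*y = 0).
  { simpl in E2. unfold uu in E2.
    assert (a*x+b*y = (a * (x * / (x*x+y*y)) + b * (y * / (x*x+y*y))) * (x*x+y*y)) as -> by (field; lra).
    rewrite E2. ring. }
  assert (K0 : (b*x - a*y) * (-y*P0 + x*Q0) = 0).
  { transitivity ((x*x+y*y)*(a*P0+b*Q0) - (a*x+b*y)*(x*P0+y*Q0)); [ring|]. rewrite E0, L. ring. }
  assert (K1 : (b*x - a*y) * (-y*P1 + x*Q1) = 0).
  { transitivity ((x*x+y*y)*(a*P1+b*Q1) - (a*x+b*y)*(x*P1+y*Q1)); [ring|]. rewrite E1, L. ring. }
  destruct (Req_dec (b*x - a*y) 0) as [Hk|Hk].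
  { split.
    - assert (a*(x*x+y*y) = 0) by (transitivity (x*(a*x+b*y) - y*(b*x-a*y)); [ring|rewrite L, Hk; ring]).
      nra.
    - assert (b*(x*x+y*y) = 0) by (transitivity (y*(a*x+b*y) + x*(b*x-a*y)); [ring|rewrite L, Hk; ring]).
      nra. }
  exfalso.
  assert (W0 : -y*P0 + x*Q0 = 0) by (apply (Rmult_eq_reg_l (b*x-a*y)); [rewrite K0; ring | exact Hk]).
  assert (W1 : -y*P1 + x*Q1 = 0) by (apply (Rmult_eq_reg_l (b*x-a*y)); [rewrite K1; ring | exact Hk]).
  set (s := 2 * uu x y).
  assert (Hs : 0 < s) by (unfold s, uu; apply Rmult_lt_0_compat; [lra| apply Rinv_0_lt_compat; lra]).
  assert (M1 : (a1-b1-s)*x - (a2+b2)*y = 0).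
  { assert (Z : (a1-b1-s)*x - (a2+b2)*y = 2 * (-y*P1 + x*Q1)) by (unfold P1, Q1, P, Q, s, uu; simpl; field; lra).
    rewrite Z, W1. ring. }
  assert (M2 : (a2-b2)*x + (a1+b1-s)*y = 0).
  { assert (Z : (a2-b2)*x + (a1+b1-s)*y = -2 * (-y*P0 + x*Q0)) by (unfold P0, Q0, P, Q, s, uu; simpl; field; lra).
    rewrite Z, W0. ring. }
  set (det := (a1-b1-s)*(a1+b1-s) + (a2+b2)*(a2-b2)).
  assert (Dx : det * x = 0).
  { transitivity ((a1+b1-s)*((a1-b1-s)*x - (a2+b2)*y) + (a2+b2)*((a2-b2)*x + (a1+b1-s)*y)).
    unfold det; ring. rewrite M1, M2; ring. }
  assert (Dy : det * y = 0).
  { transitivity ((a1-b1-s)*((a2-b2)*x + (a1+b1-s)*y) - (a2-b2)*((a1-b1-s)*x - (a2+b2)*y)).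
    unfold det; ring. rewrite M1, M2; ring. }
  assert (Hdet : det = 0).
  { assert (det * (x*x+y*y) = 0) by (transitivity (x*(det*x) + y*(det*y)); [ring| rewrite Dx, Dy; ring]).
    nra. }
  apply Hn. exists s. split; auto. simpl. unfold det in Hdet. nra.
Qed.


Lemma kernel_vec m11 m12 m21 m22 : m11*m22 - m12*m21 = 0 ->
  exists v1 v2, 0 < v1*v1 + v2*v2 /\ m11*v1 + m12*v2 = 0 /\ m21*v1 + m22*v2 = 0.
Proof.
  intros Hd.
  destruct (Req_dec (m12*m12 + m11*m11) 0) as [Z|Z].
  - assert (m12 = 0) by nra. assert (m11 = 0) by nra. subst.
    destruct (Req_dec (m22*m22 + m21*m21) 0) as [Z'|Z'].
    + assert (m22 = 0) by nra. assert (m21 = 0) by nra. subst.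
      exists 1, 0. repeat split; lra.
    + exists m22, (-m21). repeat split; try ring. nra.
  - exists m12, (-m11). repeat split; try nra.
Qed.

Lemma imm_I r1 r2 al be X : is_Re_primitive r1 r2 al be X ->
  nonimm al be -> ~ immersion_on punctured_plane X.
Proof.
  intros HX [s [Hs Heq]] Himm.
  destruct al as [a1 a2], be as [b1 b2]. simpl in Heq.
  destruct (kernel_vec (a1-b1-s) (-(a2+b2)) (a2-b2) (a1+b1-s)) as [v1 [v2 [Hv [R1 R2]]]].
  { nra. }
  set (n := v1*v1+v2*v2) in *.
  set (lam := sqrt (2 / (s * n))).
  assert (Hl : lam * lam = 2 / (s*n)).
  { unfold lam. apply sqrt_sqrt. apply Rlt_le. apply Rdiv_lt_0_compat; [lra|]. nra. }
  set (x := lam * v1). set (y := lam * v2).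
  assert (HD : x*x+y*y = 2/s).
  { unfold x, y. transitivity (lam*lam*n); [unfold n; ring|]. rewrite Hl. field. split; lra. }
  assert (Hxy : (x,y) <> (0,0)).
  { intro E. injection E as E1 E2. rewrite E1, E2 in HD.
    assert (0 < 2/s) by (apply Rdiv_lt_0_compat; lra). lra. }
  assert (Hu : uu x y = s/2).
  { unfold uu. rewrite HD. field. lra. }
  assert (Hm1 : (a1-b1-s)*x - (a2+b2)*y = 0).
  { unfold x, y. transitivity (lam * ((a1-b1-s)*v1 + (-(a2+b2))*v2)); [ring|rewrite R1; ring]. }
  assert (Hm2 : (a2-b2)*x + (a1+b1-s)*y = 0).
  { unfold x, y. transitivity (lam * ((a2-b2)*v1 + (a1+b1-s)*v2)); [ring|rewrite R2; ring]. }
  destruct (Himm x y Hxy (-y) x) as [Ey Ex].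
  - intros j Hj. rewrite (dxX _ _ _ _ _ HX j x y Hj Hxy), (dyX _ _ _ _ _ HX j x y Hj Hxy).
    destruct j as [|[|[|j]]]; [| | | lia]; unfold P, Q; rewrite Hu; simpl.
    + transitivity (- (1/2) * ((a2-b2)*x + (a1+b1-s)*y) + (s/2*s/2) * y * (x*x+y*y - 2/s) ).
      { field. lra. } rewrite Hm2, HD. field. lra.
    + transitivity ((1/2) * ((a1-b1-s)*x - (a2+b2)*y) + (s/2*s/2) * (-x) * (x*x+y*y - 2/s) ).
      { field. lra. } rewrite Hm1, HD. field. lra.
    + ring.
  - apply Hxy. rewrite Ex. f_equal. lra.
Qed.


Lemma sq_le p q : 0 <= p -> 0 <= q -> (p <= q <-> p*p <= q*q).
Proof. intros; split; intros; nra. Qed.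

Lemma omega_iff al be : Cmod al <> Cmod be -> (Omega al be <-> ~ nonimm al be).
Proof.
  destruct al as [a1 a2], be as [b1 b2]. unfold Omega, nonimm, Cmod, Re, Im; cbn [fst snd].
  set (na := a1^2+a2^2). set (nb := b1^2+b2^2).
  assert (Hna : 0 <= na) by (unfold na; nra). assert (Hnb : 0 <= nb) by (unfold nb; nra).
  pose proof (sqrt_sqrt na Hna). pose proof (sqrt_sqrt nb Hnb).
  pose proof (sqrt_pos na). pose proof (sqrt_pos nb).
  assert (E1 : sqrt na <= sqrt nb <-> na <= nb).
  { rewrite (sq_le _ _ H1 H2). lra. }
  assert (E2 : Rabs a2 <= sqrt nb <-> a2^2 <= nb).
  { rewrite (sq_le _ _ (Rabs_pos a2) H2). rewrite <- Rabs_mult, Rabs_pos_eq by nra. lra. }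
  intros Hne. rewrite E1, E2.
  assert (Hne' : na <> nb) by (intro Z; apply Hne; rewrite Z; reflexivity).
  split.
  - intros [N1 N2] [s [Hs Heq]]. apply N2. fold nb in Heq. split.
    + assert (na > nb) by lra. unfold na in *. nra.
    + assert (0 <= (a1-s)^2) by (apply pow2_ge_0). unfold nb in *. lra.
  - intros N. 
    assert (Key : forall t, 0 <= t -> t*t = nb - a2^2 -> 0 < a1 + t -> False).
    { intros t Ht Htt Hp. apply N. exists (a1 + t). split; auto. fold nb. nra. }
    assert (Hsq : forall q, 0 <= q -> sqrt q * sqrt q = q) by (intros; apply sqrt_sqrt; auto).
    split.
    + intro Hle. assert (Hlt : na < nb) by lra.
      assert (Hq : 0 <= nb - a2^2) by (unfold na in *; nra).
      apply (Key (sqrt (nb - a2^2)) (sqrt_pos _) (Hsq _ Hq)).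
      pose proof (Hsq _ Hq). pose proof (sqrt_pos (nb - a2^2)). unfold na in *. nra.
    + intros [Ha1 Ha2].
      assert (Hq : 0 <= nb - a2^2) by lra.
      pose proof (Hsq _ Hq). pose proof (sqrt_pos (nb - a2^2)).
      apply (Key (sqrt (nb - a2^2)) (sqrt_pos _) (Hsq _ Hq)).
      destruct (Rle_lt_or_eq_dec 0 (a1 + sqrt (nb - a2^2))) as [L|L]; [lra|auto|].
      exfalso. assert (a1 = 0) by lra. assert (sqrt (nb - a2^2) = 0) by lra.
      apply Hne'. unfold na. nra.
Qed.

Theorem lemma5p3 (alpha beta : C) (r1 r2 : R) :
  Cmod alpha <> Cmod beta ->
  (exists X : nat -> R -> R -> R, is_Re_primitive r1 r2 alpha beta X) /\
  (forall X : nat -> R -> R -> R, is_Re_primitive r1 r2 alpha beta X ->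
     (forall j : nat, (j < 3)%nat -> harmonic_on punctured_plane (X j)) /\
     (immersion_on punctured_plane X <-> Omega alpha beta)).
Proof.
  intros Hne. split.
  - exists (Xf r1 r2 alpha beta). apply Xf_prim.
  - intros X HX. split.
    + apply (harm r1 r2 alpha beta X HX).
    + rewrite (omega_iff _ _ Hne). split.
      * intros Hi Hn. exact (imm_I _ _ _ _ _ HX Hn Hi).
      * apply (imm_II _ _ _ _ _ HX).
Qed.
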